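(* Let $\Gamma$ be a gain operator on $\ell^\infty_+(\mathcal I)$ satisfying the $\oplus$-MBI property, and define $\sigma_*:\mathbb R_+\to\ell^\infty_+(\mathcal I)$ by $\sigma_*(r):=\bigoplus_{n=0}^\infty\hat\Gamma^n(r\mathbf 1)$ (the minimal fixed point of $\Gamma^\oplus_{r\mathbf 1}$). Then: (a) if $\sigma_*(r)$ is the only fixed point of $\Gamma^\oplus_{r\mathbf 1}$ for each $r\ge0$, then every component function $\sigma_{*i}$, $i\in\mathcal I$, is continuous; in particular $\sigma_*$ is sequentially continuous in the weak$^*$-topology; (b) if $\sigma_*(r)$ is a globally attractive fixed point of $\Gamma^\oplus_{r\mathbf 1}$ for each $r\ge0$ (i.e. $\|(\Gamma^\oplus_{r\mathbf 1})^n(s)-\sigma_*(r)\|\to0$ for every $s\in\ell^\infty_+(\mathcal I)$), then $\sigma_*$ is norm-continuous.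
   Context: Let $\mathcal I$ be a nonempty countable index set; $\ell^\infty_+(\mathcal I)$ is the cone of nonnegative real families $s=(s_i)_{i\in\mathcal I}$ with $\|s\|:=\sup_i|s_i|<\infty$, ordered componentwise; $\mathbf 1$ is the all-ones vector; $\oplus$ is the componentwise maximum, $\bigoplus$ the componentwise supremum of a bounded family. A sequence in $\ell^\infty(\mathcal I)$ converges weak$^*$ (viewing $\ell^\infty=(\ell^1)^*$) iff it is norm-bounded and converges componentwise. $\mathcal K_\infty$: continuous strictly increasing unbounded $\gamma:\mathbb R_+\to\mathbb R_+$ with $\gamma(0)=0$. For $\mathcal J\subset\mathcal I$, $s_{|\mathcal J}$ agrees with $s$ on $\mathcal J$ and is $0$ elsewhere. Gain operator: for each $i$ a finite (possibly empty) $\mathcal I_i\subset\mathcal I\setminus\{i\}$; directed graph $\mathcal G$ with vertices $\mathcal I$ and edges $ji$, $j\in\mathcal I_i$; a pointwise equicontinuous family $\gamma_{ij}\in\mathcal K_\infty$ ($ji\in E(\mathcal G)$); functions $\mu_i:\ell^\infty_+(\mathcal I)\to[0,\infty]$ with (M1) some $\xi\in\mathcal K_\infty$ has $\mu_i(0)=0$, $\mu_i(s)\ge\xi(\|s\|)$; (M2) $\mu_i$ monotone; (M3) for each finite $\mathcal J$, $\mu_i$ restricted to vectors vanishing off $\mathcal J$ is finite-valued and continuous; (M4) for each norm-bounded $A$ and $\varepsilon>0$ there is $\delta>0$ with $\sup_i|\mu_i(s_{|\mathcal I_i})-\mu_i(s^0_{|\mathcal I_i})|\le\varepsilon$ whenever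 $s^0\in A$, $\|s-s^0\|\le\delta$. $\Gamma_i(s):=\mu_i([\gamma_{ij}(s_j)]_{j\in\mathcal I_i})$ (argument zero outside $\mathcal I_i$). $\hat\Gamma(s):=s\oplus\Gamma(s)$ and $\Gamma^\oplus_b(s):=b\oplus\Gamma(s)$. $\oplus$-MBI property: there is $\varphi\in\mathcal K_\infty$ such that for all $s,b$, $s\le b\oplus\Gamma(s)$ implies $\|s\|\le\varphi(\|b\|)$. *)

(* Defs.v *)
From HB Require Import structures.
From mathcomp Require Import all_boot all_order all_algebra.
From mathcomp Require Import all_classical all_reals all_analysis.
Set Implicit Arguments. Unset Strict Implicit. Unset Printing Implicit Defensive.
Import Order.TTheory GRing.Theory Num.Theory.
Import numFieldNormedType.Exports.
Local Open Scope classical_set_scope.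
Local Open Scope ring_scope.

Section Defs.
Variables (R : realType) (I : countType).

(* elements of l^infty_+(I) are represented by s : I -> R with this predicate *)
Definition linf_plus (s : I -> R) : Prop :=
  (forall i, 0 <= s i) /\ exists M : R, forall i, `|s i| <= M.

Definition supnorm (s : I -> R) : R := sup (range (fun i => `|s i|)).

Definition restr (J : seq I) (s : I -> R) : I -> R :=
  fun i => if i \in J then s i else 0.

Definition vanishes_off (J : seq I) (s : I -> R) : Prop :=
  forall i, i \notin J -> s i = 0.

(* class K_infty of functions R_+ -> R_+ (represented on R) *)
Definition Kinf (g : R -> R) : Prop :=
  [/\ g 0 = 0,
      {within [set x : R | 0 <= x], continuous g},
      (forall x y, 0 <= x -> x < y -> g x < g y) &
      (forall M, exists x, 0 <= x /\ M < g x)].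

Definition Gam (Ii : I -> seq I) (gam : I -> I -> R -> R)
    (mu : I -> (I -> R) -> \bar R) (s : I -> R) : I -> R :=
  fun i => fine (mu i (fun j => if j \in Ii i then gam i j (s j) else 0)).

Definition hatGam Ii gam mu (s : I -> R) : I -> R :=
  fun i => Num.max (s i) (Gam Ii gam mu s i).

Definition Gamb Ii gam mu (b s : I -> R) : I -> R :=
  fun i => Num.max (b i) (Gam Ii gam mu s i).

Definition sigma_star Ii gam mu (r : R) : I -> R :=
  fun i => sup (range (fun n : nat => iter n (hatGam Ii gam mu) (fun _ => r) i)).

Definition is_gain_operator (Ii : I -> seq I) (gam : I -> I -> R -> R)
    (mu : I -> (I -> R) -> \bar R) : Prop :=
  [/\
      (forall i, i \notin Ii i),
      (forall i j, j \in Ii i -> Kinf (gam i j)),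
      (forall r : R, 0 <= r -> forall eps : R, 0 < eps -> exists2 delta : R, 0 < delta &
         forall i j, j \in Ii i -> forall r', 0 <= r' -> `|r - r'| < delta ->
           `|gam i j r - gam i j r'| < eps),
      (exists xi, Kinf xi /\ (forall i, (mu i (fun _ => 0) = 0%E) /\
         (forall s, linf_plus s -> ((xi (supnorm s))%:E <= mu i s)%E))) &
   [/\
      (forall i s s', linf_plus s -> linf_plus s' -> (forall j, s j <= s' j) ->
         (mu i s <= mu i s')%E),
      (forall i (J : seq I),
         (forall s, linf_plus s -> vanishes_off J s -> mu i s \is a fin_num) /\
         (forall s, linf_plus s -> vanishes_off J s ->
            forall eps : R, 0 < eps -> exists2 delta : R, 0 < delta &
            forall s', linf_plus s' -> vanishes_off J s' ->
              supnorm (fun j => s' j - s j) <= delta ->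
              `|fine (mu i s') - fine (mu i s)| < eps)) &
      (forall A : set (I -> R), A `<=` linf_plus ->
         (exists M : R, forall s, A s -> supnorm s <= M) ->
         forall eps : R, 0 < eps -> exists2 delta : R, 0 < delta &
         forall s0 s, A s0 -> linf_plus s -> supnorm (fun j => s j - s0 j) <= delta ->
           forall i, (`|mu i (restr (Ii i) s) - mu i (restr (Ii i) s0)| <= eps%:E)%E)]].

Definition oplus_MBI Ii gam mu : Prop :=
  exists phi, Kinf phi /\
    forall s b, linf_plus s -> linf_plus b ->
      (forall i, s i <= Gamb Ii gam mu b s i) -> supnorm s <= phi (supnorm b).

End Defs.

(* Main.v *)
Require Import Defs.
From HB Require Import structures.
From mathcomp Require Import all_boot all_order all_algebra.
From mathcomp Require Import all_classical all_reals all_analysis.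
From mathcomp Require Import lra.
Import Order.TTheory GRing.Theory Num.Theory.
Import numFieldNormedType.Exports.
Local Open Scope classical_set_scope.
Local Open Scope ring_scope.
Set Implicit Arguments. Unset Strict Implicit. Unset Printing Implicit Defensive.
Section Basics.
Variables (R : realType) (I : countType) (HI : inhabited I).

Lemma supnorm_ge (s : I -> R) (M : R) : (forall i, `|s i| <= M) ->
  forall i, `|s i| <= supnorm s.
Proof.
move=> HM i; apply: sup_upper_bound; last by exists i.
split; first by exists `|s i|, i.
by exists M => _ [j _ <-].
Qed.

Lemma supnorm_le (s : I -> R) (c : R) : (forall i, `|s i| <= c) -> supnorm s <= c.
Proof.
move=> H; apply: ge_sup; first by case: HI => i; exists `|s i|, i.
by move=> _ [j _ <-].
Qed.

Lemma supnorm_cst (r : R) : 0 <= r -> supnorm (fun _ : I => r) = r.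
Proof.
move=> r0; apply/le_anti/andP; split.
  by apply: supnorm_le => i; rewrite ger0_norm.
case: HI => i; have := @supnorm_ge (fun _ : I => r) r.
by rewrite ger0_norm //; apply => // j; rewrite ger0_norm.
Qed.

Lemma vanish_bounded (J : seq I) (s : I -> R) : vanishes_off J s ->
  exists M, forall i, `|s i| <= M.
Proof.
elim: J s => [|a J IH] s Hs.
  by exists 0 => i; rewrite Hs // normr0.
have Hv : vanishes_off J (fun i => if i == a then 0 else s i).
  move=> i Hi /=; case: eqP => // /eqP ia; apply: Hs.
  by rewrite in_cons negb_or ia.
have [M HM] := IH _ Hv.
exists (M + `|s a|) => i; have := HM i; have := normr_ge0 (s a).
case: eqP => [->|_] /=; rewrite ?normr0; lra.
Qed.

Lemma Kinf_ge0 (g : R -> R) : Kinf g -> forall x, 0 <= x -> 0 <= g x.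
Proof.
case=> g0 _ gi _ x; rewrite le0r => /orP [/eqP ->|x0]; first by rewrite g0.
by rewrite -g0 ltW // gi.
Qed.

Lemma Kinf_mono (g : R -> R) : Kinf g -> forall x y, 0 <= x -> x <= y -> g x <= g y.
Proof.
case=> _ _ gi _ x y x0; rewrite le_eqVlt => /orP [/eqP ->//|xy].
by rewrite ltW // gi.
Qed.

Lemma max_diff (a b c d e : R) : `|a - c| <= e -> `|b - d| <= e ->
  `|Num.max a b - Num.max c d| <= e.
Proof.
rewrite !ler_norml => /andP[h1 h2] /andP[h3 h4].
have [ab|ab] := leP a b; have [cd|cd] := leP c d;
  rewrite ?(max_r ab) ?(max_l (ltW ab)) ?(max_r cd) ?(max_l (ltW cd));
  apply/andP; split; lra.
Qed.

Lemma max_cases (a b : R) : (a <= b /\ Num.max a b = b) \/ (b < a /\ Num.max a b = a).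
Proof.
by have [ab|ab] := leP a b; [left | right].
Qed.

Lemma fine_diff (a b : \bar R) (e : R) : a \is a fin_num -> b \is a fin_num ->
  (`|a - b| <= e%:E)%E -> `|fine a - fine b| <= e.
Proof.
by case: a => // a; case: b => // b _ _; rewrite -EFinB abse_EFin lee_fin.
Qed.

Lemma list_eventually (P : I -> nat -> Prop) (l : seq I) :
  (forall j, j \in l -> exists n, forall m, (n <= m)%N -> P j m) ->
  exists n, forall j, j \in l -> forall m, (n <= m)%N -> P j m.
Proof.
elim: l => [|a l IH] H; first by exists 0%N.
have [n1 H1] := H a (mem_head _ _).
have [n2 H2] : exists n, forall j, j \in l -> forall m, (n <= m)%N -> P j m.
  by apply: IH => j jl; apply: H; rewrite in_cons jl orbT.
exists (maxn n1 n2) => j; rewrite in_cons => /orP [/eqP ->|jl] m.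
  by rewrite geq_max => /andP[] *; apply: H1.
by rewrite geq_max => /andP[] *; apply: H2.
Qed.

End Basics.
Section Gain.
Variables (R : realType) (I : countType) (HI : inhabited I)
  (Ii : I -> seq I) (gam : I -> I -> R -> R) (mu : I -> (I -> R) -> \bar R).
Hypothesis HK : forall i j, j \in Ii i -> Kinf (gam i j).
Hypothesis Heq : forall r : R, 0 <= r -> forall eps : R, 0 < eps -> exists2 delta : R, 0 < delta &
         forall i j, j \in Ii i -> forall r', 0 <= r' -> `|r - r'| < delta ->
           `|gam i j r - gam i j r'| < eps.
Variable xi : R -> R.
Hypothesis Hxi0 : Kinf xi.
Hypothesis Hxi : forall i s, linf_plus s -> ((xi (supnorm s))%:E <= mu i s)%E.
Hypothesis HM2 : forall i s s', linf_plus s -> linf_plus s' -> (forall j, s j <= s' j) ->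
         (mu i s <= mu i s')%E.
Hypothesis HM3 : forall i (J : seq I),
         (forall s, linf_plus s -> vanishes_off J s -> mu i s \is a fin_num).
Hypothesis HM4 : forall A : set (I -> R), A `<=` @linf_plus R I ->
         (exists M : R, forall s, A s -> supnorm s <= M) ->
         forall eps : R, 0 < eps -> exists2 delta : R, 0 < delta &
         forall s0 s, A s0 -> linf_plus s -> supnorm (fun j => s j - s0 j) <= delta ->
           forall i, (`|mu i (restr (Ii i) s) - mu i (restr (Ii i) s0)| <= eps%:E)%E.
Variable phi : R -> R.
Hypothesis Hphi : Kinf phi.
Hypothesis HMBI : forall s b, linf_plus s -> linf_plus b ->
      (forall i, s i <= Gamb Ii gam mu b s i) -> supnorm s <= phi (supnorm b).

Local Notation G := (Gam Ii gam mu).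
Local Notation T r := (Gamb Ii gam mu (fun _ => r)).
Local Notation sig := (sigma_star Ii gam mu).
Local Notation H := (hatGam Ii gam mu).

Definition vec i (x : I -> R) := fun j => if j \in Ii i then gam i j (x j) else 0.

Lemma G_vec (x : I -> R) i : G x i = fine (mu i (vec i x)). Proof. by []. Qed.
Lemma T_eq (r : R) (x : I -> R) i : T r x i = Num.max r (G x i). Proof. by []. Qed.

Definition nonneg (x : I -> R) := forall j, 0 <= x j.

Lemma lin_of (x : I -> R) (M : R) : nonneg x -> (forall j, x j <= M) -> linf_plus x.
Proof. by move=> x0 xM; split => //; exists M => j; rewrite ger0_norm. Qed.

Lemma vec_ge0 (x : I -> R) i : nonneg x -> nonneg (vec i x).
Proof. by move=> x0 j; rewrite /vec; case: ifP => // ji; apply: Kinf_ge0; auto. Qed.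

Lemma vec_lin (x : I -> R) i : nonneg x -> linf_plus (vec i x).
Proof.
move=> x0; split; first exact: vec_ge0.
by apply: (@vanish_bounded _ _ (Ii i)) => j /negbTE ji; rewrite /vec ji.
Qed.

Lemma vec_fin (x : I -> R) i : nonneg x -> mu i (vec i x) \is a fin_num.
Proof.
move=> x0; apply: (@HM3 i (Ii i)); first exact: vec_lin.
by move=> j /negbTE ji; rewrite /vec ji.
Qed.

Lemma supnorm_ge0 (s : I -> R) : linf_plus s -> 0 <= supnorm s.
Proof.
case=> _ [M HM]; case: HI => i.
have := supnorm_ge HM i; have := normr_ge0 (s i); lra.
Qed.

Lemma G_ge0 (x : I -> R) i : nonneg x -> 0 <= G x i.
Proof.
move=> x0; rewrite G_vec; apply: fine_ge0.
have h := Hxi i (vec_lin i x0).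
have h0 : (0 <= (xi (supnorm (vec i x)))%:E)%E.
  by rewrite lee_fin; apply: Kinf_ge0 => //; apply: supnorm_ge0; apply: vec_lin.
exact: (le_trans h0 h).
Qed.

Lemma G_mono (x y : I -> R) i : nonneg x -> (forall j, x j <= y j) -> G x i <= G y i.
Proof.
move=> x0 xy; have y0 : nonneg y by move=> j; apply: le_trans (x0 j) (xy j).
rewrite !G_vec; apply: fine_le; try exact: vec_fin.
apply: HM2; try exact: vec_lin.
move=> j; rewrite /vec; case: ifP => // ji; apply: Kinf_mono; auto.
Qed.

Lemma T_ge0 (r : R) (x : I -> R) i : 0 <= r -> nonneg x -> 0 <= T r x i.
Proof. by move=> r0 x0; rewrite T_eq le_max r0. Qed.

Lemma T_mono (r r' : R) (x y : I -> R) i : r <= r' -> nonneg x -> (forall j, x j <= y j) -> T r x i <= T r' y i.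
Proof.
move=> rr x0 xy; rewrite !T_eq ge_max !le_max rr /=.
by rewrite (G_mono i x0 xy) orbT.
Qed.


Definition hs (r : R) n := iter n H (fun _ : I => r).
Lemma H_eq (x : I -> R) i : H x i = Num.max (x i) (G x i). Proof. by []. Qed.

Lemma mbi_bound (r : R) (s : I -> R) : 0 <= r -> nonneg s -> (exists M, forall i, s i <= M) ->
  (forall i, s i <= Num.max r (G s i)) -> forall i, s i <= phi r.
Proof.
move=> r0 s0 [M sM] Hs i.
have ls := lin_of s0 sM.
have lb : linf_plus (fun _ : I => r) by apply: (@lin_of _ r) => // j.
have := HMBI ls lb Hs; rewrite supnorm_cst // => Hn.
have sM' : forall j, `|s j| <= M by move=> j; rewrite ger0_norm.
have := supnorm_ge sM' i; rewrite ger0_norm //; lra.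
Qed.

Lemma hs_props (r : R) : 0 <= r -> forall n, nonneg (hs r n) /\
  (forall i, hs r n i <= phi r) /\ (forall i, hs r n i <= Num.max r (G (hs r n) i)).
Proof.
move=> r0; elim=> [|n [s0 [sb sT]]].
  have h0 : nonneg (hs r 0) by move=> j.
  have hT : forall i, hs r 0 i <= Num.max r (G (hs r 0) i) by move=> i; rewrite le_max lexx.
  split => //; split => //; apply: mbi_bound => //; exists r => j; exact: lexx.
have ss' : forall i, hs r n i <= hs r n.+1 i.
  by move=> i; rewrite /hs iterS -/(hs r n) H_eq le_max lexx.
have s'T : forall i, hs r n.+1 i <= Num.max r (G (hs r n) i).
  move=> i; rewrite /hs iterS -/(hs r n) H_eq ge_max sT /=.
  by rewrite le_max lexx orbT.
have s'0 : nonneg (hs r n.+1) by move=> j; apply: le_trans (s0 j) (ss' j).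
have p0 : 0 <= phi r by apply: Kinf_ge0.
pose t := fun i => Num.min (hs r n.+1 i) (phi r + 1).
have st : forall i, hs r n i <= t i.
  by move=> i; rewrite /t le_min ss' /=; have := sb i; lra.
have t0 : nonneg t by move=> i; rewrite /t le_min s'0 /=; lra.
have tT : forall i, t i <= Num.max r (G t i).
  move=> i; apply: le_trans (_ : Num.max r (G (hs r n) i) <= _).
    by apply: le_trans (s'T i); rewrite /t ge_min lexx.
  exact: (T_mono i (lexx r) s0 st).
have tbd : exists M, forall i, t i <= M.
  by exists (phi r + 1) => i; rewrite /t ge_min lexx orbT.
have tb := mbi_bound r0 t0 tbd tT.
have s'b : forall i, hs r n.+1 i <= phi r.
  by move=> i; have := tb i; rewrite /t ge_min => /orP [//|]; lra.
split => //; split => // i.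
apply: le_trans (s'T i) _.
exact: (T_mono i (lexx r) s0 ss').
Qed.

Lemma sig_props (r : R) : 0 <= r -> forall i,
  (forall n, hs r n i <= sig r i) /\ sig r i <= phi r /\ r <= sig r i.
Proof.
move=> r0 i; have hp := hs_props r0.
have hsup : has_sup (range (fun n => hs r n i)).
  split; first by exists (hs r 0 i), 0%N.
  by exists (phi r) => _ [n _ <-]; have [_ [h _]] := hp n; apply: h.
have h1 : forall n, hs r n i <= sig r i.
  by move=> n; apply: sup_upper_bound => //; exists n.
split => //; split; last by exact: (h1 0%N).
apply: ge_sup; first by exists (hs r 0 i), 0%N.
by move=> _ [n _ <-]; have [_ [h _]] := hp n; apply: h.
Qed.

Lemma sig_ge0 (r : R) : 0 <= r -> nonneg (sig r).
Proof. by move=> r0 j; have [_ [_ h]] := sig_props r0 j; apply: le_trans h. Qed.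

Lemma sig_le (r : R) : 0 <= r -> forall j, sig r j <= phi r.
Proof. by move=> r0 j; have [_ [h _]] := sig_props r0 j. Qed.

Lemma sig_lin (r : R) : 0 <= r -> linf_plus (sig r).
Proof. by move=> r0; apply: (lin_of (sig_ge0 r0) (sig_le r0)). Qed.

Lemma sig_min (r : R) (x : I -> R) : 0 <= r -> nonneg x ->
  (forall j, r <= x j) -> (forall j, G x j <= x j) -> forall j, sig r j <= x j.
Proof.
move=> r0 x0 rx Gx.
have hx : forall n j, hs r n j <= x j.
  elim=> [|n IH] j; first exact: rx.
  rewrite /hs iterS -/(hs r n) H_eq ge_max IH /=.
  have [h0 _] := hs_props r0 n.
  exact: le_trans (G_mono j h0 IH) (Gx j).
move=> j; apply: ge_sup; first by exists (hs r 0 j), 0%N.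
by move=> _ [n _ <-]; apply: hx.
Qed.

Lemma sig_mono (Hfix : forall r, 0 <= r -> T r (sig r) = sig r) (r r' : R) :
  0 <= r -> r <= r' -> forall j, sig r j <= sig r' j.
Proof.
move=> r0 rr; have r'0 : 0 <= r' by apply: le_trans rr.
apply: sig_min => //; first exact: sig_ge0.
  by move=> j; have [_ [_ h]] := sig_props r'0 j; apply: le_trans h.
move=> j; rewrite -{2}(Hfix r' r'0) T_eq le_max lexx orbT //.
Qed.

Lemma unif_eq (C eps : R) : 0 < eps -> exists2 d, 0 < d & forall i j, j \in Ii i ->
  forall x y, 0 <= x -> x <= C -> 0 <= y -> `|x - y| < d -> `|gam i j x - gam i j y| < eps.
Proof.
move=> e0.
pose P (c : R) := exists2 d, 0 < d & forall i j, j \in Ii i ->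
  forall x y, 0 <= x -> x <= c -> 0 <= y -> `|x - y| < d -> `|gam i j x - gam i j y| < eps.
have Pmono : forall c c', c' <= c -> P c -> P c'.
  move=> c c' cc [d dp Hd]; exists d => // i j ji x y x0 xc y0 xy.
  by apply: Hd => //; apply: le_trans cc.
have P0 : P 0.
  have [d0 d0p H0] := Heq (lexx 0) e0.
  exists d0 => // i j ji x y x0 xc y0 xy.
  have x00 : x = 0 by apply/le_anti/andP.
  by move: xy; rewrite x00 => xy; apply: H0.
case: (leP 0 C) => C0; last first.
  by exists 1 => // i j ji x y x0 xC; lra.
have [//|nPC] := pselect (P C).
pose S := [set c : R | 0 <= c /\ P c].
have S_ub : forall c, S c -> c <= C.
  move=> c [c0 Pc]; rewrite leNgt; apply/negP => Cc; apply: nPC.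
  exact: Pmono (ltW Cc) Pc.
have hS : has_sup S by split; [exists 0; split => //; exact: lexx | exists C].
pose cs := sup S.
have cs0 : 0 <= cs by apply: sup_upper_bound => //; split => //; exact: lexx.
have e2 : 0 < eps / 2 by lra.
have [ds dsp Hs] := Heq cs0 e2.
have ds2 : 0 < ds / 2 by lra.
have [c [c0 [dc dcp Hc]] cc] := sup_adherent ds2 hS.
have Sc : S (cs + ds / 4).
  split; first lra.
  exists (Num.min dc (ds / 4)); first by rewrite lt_min dcp /=; lra.
  move=> i j ji x y x0 xc y0; rewrite lt_min => /andP [xy1 xy2].
  case: (leP x c) => xc'; first exact: Hc.
  have h1 : `|cs - x| < ds.
    rewrite ltr_norml; apply/andP; split; rewrite -/cs in cc; lra.
  have h2 : `|cs - y| < ds.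
    move: xy2; rewrite !ltr_norml => /andP [a1 a2]; apply/andP; split;
    rewrite -/cs in cc; lra.
  have := Hs i j ji x x0 h1; have := Hs i j ji y y0 h2.
  rewrite !ltr_norml => /andP [b1 b2] /andP [b3 b4]; apply/andP; split; lra.
have := sup_upper_bound hS Sc; rewrite -/cs; lra.
Qed.

Lemma gam_bound (C : R) : exists2 B, 0 <= B & forall i j, j \in Ii i ->
  forall x, 0 <= x -> x <= C -> gam i j x <= B.
Proof.
have [d d0 Hd] := unif_eq C ltr01.
have claim : forall n : nat, forall i j, j \in Ii i -> forall x, 0 <= x -> x <= C ->
    x <= n%:R * (d / 2) -> gam i j x <= n%:R.
  elim=> [|n IH] i j ji x x0 xC.
    rewrite mul0r => x00; have -> : x = 0 by apply/le_anti/andP.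
    by case: (HK ji) => -> _ _ _.
  move=> xn; case: (leP x (n%:R * (d / 2))) => h.
    by apply: le_trans (IH i j ji x x0 xC h) _; rewrite ler_nat.
  have hn : 0 <= n%:R :> R by [].
  move: xn; rewrite -addn1 natrD mulrDl mul1r => xn.
  pose x' := Num.max 0 (x - d / 2).
  have [x'0 x'x x'n x'd] : [/\ 0 <= x', x' <= x, x' <= n%:R * (d / 2) & `|x' - x| < d].
    rewrite /x'; have [[h' ->]|[h' ->]] := max_cases 0 (x - d / 2).
      split; try lra.
      by rewrite ltr_norml; apply/andP; split; lra.
    split; try lra.
      by have : 0 <= n%:R * (d / 2) by apply: mulr_ge0 => //; lra.
    by rewrite ltr_norml; apply/andP; split; lra.
  have := IH i j ji x' x'0 (le_trans x'x xC) x'n.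
  have := Hd i j ji x' x x'0 (le_trans x'x xC) x0 x'd.
  rewrite ltr_norml => /andP [a1 a2]; lra.
case: (leP 0 C) => C0; last first.
  by exists 0 => // i j ji x x0 xC; lra.
have C2 : 0 <= C * 2 / d by apply: divr_ge0 => //; [lra | exact: ltW].
have hb := archi_boundP C2.
exists (Num.Def.archi_bound (C * 2 / d))%:R => // i j ji x x0 xC.
apply: claim => //; apply: le_trans xC _.
move: hb; rewrite ltr_pdivrMr // => hb.
have : C * 2 <= (Num.Def.archi_bound (C * 2 / d))%:R * d by exact: ltW.
lra.
Qed.

Lemma restr_vec i (z : I -> R) : restr (Ii i) (vec i z) = vec i z.
Proof.
by apply: boolp.funext => j; rewrite /restr /vec; case: (j \in Ii i).
Qed.

Lemma G_cont (C eps : R) : 0 < eps -> exists2 d, 0 < d & forall i (x y : I -> R),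
  nonneg x -> nonneg y -> (forall j, x j <= C) -> (forall j, y j <= C) ->
  (forall j, j \in Ii i -> `|x j - y j| < d) -> `|G x i - G y i| <= eps.
Proof.
move=> e0; have [B B0 HB] := gam_bound C.
pose A := [set s : I -> R | linf_plus s /\ nonneg s /\ (forall j, s j <= B)].
have AL : A `<=` @linf_plus R I by move=> s [].
have AM : exists M, forall s, A s -> supnorm s <= M.
  exists B => s [_ [s0 sB]]; apply: supnorm_le => // j; rewrite ger0_norm //.
have [d4 d4p H4] := HM4 AL AM e0.
have [d1 d1p H1] := unif_eq C d4p.
exists d1 => // i x y x0 y0 xC yC xy.
have Ay : A (vec i y).
  split; first exact: vec_lin.
  split; first exact: vec_ge0.
  by move=> j; rewrite /vec; case: ifP => // ji; apply: HB.
have hs : supnorm (fun j => vec i x j - vec i y j) <= d4.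
  apply: supnorm_le => // j; rewrite /vec; case: ifP => ji.
    exact: ltW (H1 i j ji (x j) (y j) (x0 j) (xC j) (y0 j) (xy j ji)).
  by rewrite subr0 normr0 ltW.
have := H4 (vec i y) (vec i x) Ay (vec_lin i x0) hs i.
rewrite !restr_vec => h; rewrite !G_vec; apply: fine_diff => //; exact: vec_fin.
Qed.

Section Fix.
Hypothesis Hfix : forall r, 0 <= r -> T r (sig r) = sig r.

Lemma iterT_ge0 (r : R) (x : I -> R) n : 0 <= r -> nonneg x -> nonneg (iter n (T r) x).
Proof.
move=> r0 x0; elim: n => [|n IH] //= j; exact: T_ge0.
Qed.

Lemma iterT_mono (r : R) (x y : I -> R) n : 0 <= r -> nonneg x -> (forall j, x j <= y j) ->
  forall j, iter n (T r) x j <= iter n (T r) y j.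
Proof.
move=> r0 x0 xy; elim: n => [|n IH] //= j.
by apply: T_mono; [exact: lexx | exact: iterT_ge0 | exact: IH].
Qed.

Lemma iterT_fix (r : R) n : 0 <= r -> iter n (T r) (sig r) = sig r.
Proof. by move=> r0; elim: n => [|n IH] //=; rewrite IH Hfix. Qed.

Lemma iterT_le_sig (r : R) (x : I -> R) n : 0 <= r -> nonneg x -> (forall j, x j <= sig r j) ->
  forall j, iter n (T r) x j <= sig r j.
Proof.
move=> r0 x0 xs j; rewrite -(iterT_fix n r0); exact: iterT_mono.
Qed.

Lemma iterT_rr (r r' : R) (x : I -> R) n : 0 <= r' -> r' <= r -> nonneg x ->
  (forall j, x j <= sig r j) -> forall j, iter n (T r') x j <= sig r j.
Proof.
move=> r'0 rr x0 xs; elim: n => [|n IH] //= j.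
rewrite -(Hfix (le_trans r'0 rr)); apply: T_mono => //; exact: iterT_ge0.
Qed.

Lemma iter_cont (r : R) (x : I -> R) : 0 <= r -> nonneg x -> (forall j, x j <= sig (r + 1) j) ->
  forall n eps, 0 < eps -> exists2 d, 0 < d & forall r', 0 <= r' -> r' <= r + 1 ->
   `|r' - r| < d -> forall i, `|iter n (T r') x i - iter n (T r) x i| <= eps.
Proof.
move=> r0 x0 xs; have r10 : 0 <= r + 1 by lra.
elim=> [|n IH] eps e0.
  by exists 1 => // r' _ _ _ i /=; rewrite subrr normr0 ltW.
have [d3 d3p H3] := G_cont (phi (r + 1)) e0.
have d32 : 0 < d3 / 2 by lra.
have [dn dnp Hn] := IH _ d32.
exists (Num.min dn eps); first by rewrite lt_min dnp.
move=> r' r'0 r'r; rewrite lt_min => /andP [h1 h2] i /=.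
rewrite !T_eq; apply: max_diff; first exact: ltW.
apply: H3; try exact: iterT_ge0.
- move=> j; apply: le_trans (sig_le r10 j); exact: iterT_rr.
- move=> j; apply: le_trans (sig_le r10 j); apply: iterT_rr => //; lra.
- move=> j _; apply: le_lt_trans (Hn r' r'0 r'r h1 j) _; lra.
Qed.

End Fix.

Definition winv (n : nat) : R := (n.+1%:R)^-1.

Lemma inv_facts (n m : nat) : 0 < winv n /\ winv n <= 1 /\
  ((n <= m)%N -> winv m <= winv n).
Proof.
rewrite /winv.
split; first by rewrite invr_gt0 ltr0Sn.
split; first by rewrite invf_le1 ?ltr0Sn // ler1n.
move=> nm; rewrite lef_pV2 ?posrE ?ltr0Sn // ler_nat; by [].
Qed.

Lemma max_le_shift (a b c d e : R) : a <= c + e -> b <= d + e -> Num.max a b <= Num.max c d + e.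
Proof.
have [[h1 ->]|[h1 ->]] := max_cases a b; have [[h2 ->]|[h2 ->]] := max_cases c d; lra.
Qed.

Lemma comp_le (a b : I -> R) (K : R) i : nonneg a -> nonneg b -> (forall j, a j <= K) ->
  (forall j, b j <= K) -> `|a i - b i| <= supnorm (fun j => a j - b j).
Proof.
move=> a0 b0 aK bK; apply: (@supnorm_ge _ _ _ K) => j.
have := a0 j; have := b0 j; have := aK j; have := bK j.
rewrite ler_norml => *; apply/andP; split; lra.
Qed.

Lemma hs_sup (r : R) i : 0 <= r -> has_sup (range (fun n => hs r n i)).
Proof.
move=> r0; split; first by exists (hs r 0 i), 0%N.
by exists (phi r) => _ [n _ <-]; have [_ [h _]] := hs_props r0 n; apply: h.
Qed.

Section Fix2.
Hypothesis Hfix : forall r, 0 <= r -> T r (sig r) = sig r.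

Lemma hs_le_iterT (r : R) n : 0 <= r -> forall j, hs r n j <= iter n.+1 (T r) (fun _ => 0) j.
Proof.
move=> r0; elim: n => [|n IH] j.
  by rewrite /= T_eq le_max lexx.
have [h0 [_ hT]] := hs_props r0 n.
have h0' : nonneg (fun _ : I => 0 : R) by move=> k; exact: lexx.
have hm : G (hs r n) j <= G (iter n.+1 (T r) (fun _ => 0)) j by apply: G_mono.
rewrite /hs iterS -/(hs r n) H_eq [iter n.+2 _ _ _]/= T_eq ge_max; apply/andP; split.
  apply: le_trans (hT j) _; rewrite ge_max !le_max lexx /= hm orbT //.
by rewrite le_max hm orbT.
Qed.

Lemma lower_cont (r : R) i eps : 0 <= r -> 0 < eps -> exists2 d, 0 < d &
  forall r', 0 <= r' -> r' <= r + 1 -> `|r' - r| < d -> sig r i - eps < sig r' i.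
Proof.
move=> r0 e0; have e2 : 0 < eps / 2 by lra.
have [_ [n _ <-] hn] := sup_adherent e2 (hs_sup i r0).
have x0 : nonneg (fun _ : I => 0 : R) by move=> k; exact: lexx.
have r10 : 0 <= r + 1 by lra.
have [d dp Hd] := iter_cont Hfix r0 x0 (fun j => sig_ge0 r10 j) n.+1 e2.
exists d => // r' r'0 r'r rd.
have h1 := Hd r' r'0 r'r rd i.
have h2 := hs_le_iterT n r0 i.
have h3 := iterT_le_sig Hfix n.+1 r'0 x0 (fun j => sig_ge0 r'0 j) i.
move: h1; rewrite ler_norml => /andP [a1 a2].
rewrite /sigma_star -/(hs r) in hn *.
change (sup (range (fun n0 : nat => hs r n0 i)) - eps <
  sigma_star Ii gam mu r' i).
lra.
Qed.

End Fix2.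

Section Fix3.
Hypothesis Hfix : forall r, 0 <= r -> T r (sig r) = sig r.

Lemma upper_cont (Hu : forall r, 0 <= r -> forall s, linf_plus s -> T r s = s -> s = sig r)
  (r : R) i eps : 0 <= r -> 0 < eps -> exists2 d, 0 < d &
  forall r', 0 <= r' -> `|r' - r| < d -> sig r' i < sig r i + eps.
Proof.
move=> r0 e0.
pose q (n : nat) := r + winv n.
have qr : forall n, r < q n by move=> n; have [h _] := inv_facts n 0; rewrite /q; lra.
have qr1 : forall n, q n <= r + 1 by move=> n; have [_ [h _]] := inv_facts n 0; rewrite /q; lra.
have q0 : forall n, 0 <= q n by move=> n; have := qr n; lra.
have r10 : 0 <= r + 1 by lra.
have sq_mono : forall n m j, (n <= m)%N -> sig (q m) j <= sig (q n) j.
  move=> n m j nm; apply: sig_mono => //.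
  by have [_ [_ h]] := inv_facts n m; rewrite /q; have := h nm; lra.
have sq_low : forall n j, sig r j <= sig (q n) j.
  by move=> n j; apply: sig_mono => //; apply: ltW.
have sq_up : forall n j, sig (q n) j <= phi (r + 1).
  move=> n j; apply: le_trans (sig_le r10 j); exact: sig_mono.
pose u j := inf (range (fun n => sig (q n) j)).
have hinf : forall j, has_inf (range (fun n => sig (q n) j)).
  move=> j; split; first by exists (sig (q 0%N) j), 0%N.
  by exists (sig r j) => _ [n _ <-].
have u_ge : forall j, sig r j <= u j.
  move=> j; apply: lb_le_inf; first by exists (sig (q 0%N) j), 0%N.
  by move=> _ [n _ <-].
have u_le : forall n j, u j <= sig (q n) j.
  by move=> n j; apply: ge_inf; [case: (hinf j) | exists n].
have u_adh : forall j eta, 0 < eta -> exists n, sig (q n) j < u j + eta.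
  by move=> j eta eta0; have [_ [n _ <-] h] := inf_adherent eta0 (hinf j); exists n.
have u0 : nonneg u by move=> j; apply: le_trans (u_ge j); exact: sig_ge0.
have ub : forall j, u j <= phi (r + 1) by move=> j; apply: le_trans (u_le 0%N j) _.
have Tu : T r u = u.
  apply: boolp.funext => k; apply/le_anti/andP; split.
    apply: lb_le_inf; first by exists (sig (q 0%N) k), 0%N.
    move=> _ [n _ <-]; rewrite -(Hfix (q0 n)).
    exact: (T_mono k (ltW (qr n)) u0 (u_le n)).
  apply/ler_addgt0Pr => eta eta0.
  have [d3 d3p H3] := G_cont (phi (r + 1)) eta0.
  have ev : forall j, j \in Ii k -> exists n, forall m, (n <= m)%N ->
      `|sig (q m) j - u j| < d3.
    move=> j _; have [n hn] := u_adh j d3 d3p; exists n => m nm.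
    have := sq_mono n m j nm; have := u_le m j.
    rewrite ltr_norml => *; apply/andP; split; lra.
  have [n0 Hn0] := list_eventually ev.
  have [n1 _ Hn1] := near_infty_natSinv_lt (PosNum eta0).
  pose m := maxn n0 n1.
  have hq : q m <= r + eta.
    by have := Hn1 m (leq_maxr n0 n1); rewrite /q /=; rewrite -/(winv m); lra.
  have hG : `|G (sig (q m)) k - G u k| <= eta.
    apply: H3 => //; first exact: sig_ge0.
    by move=> j jk; apply: Hn0 => //; apply: leq_maxl.
  apply: le_trans (u_le m k) _; rewrite -(Hfix (q0 m)) !T_eq.
  apply: max_le_shift; first lra.
  by move: hG; rewrite ler_norml => /andP [_ h]; lra.
have ul : linf_plus u by apply: (lin_of u0 ub).
have usig := Hu r r0 u ul Tu.
have [n hn] := u_adh i eps e0.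
have [dp [_ _]] := inv_facts n 0.
exists (winv n) => // r' r'0 rd.
case: (leP r' r) => h.
  have := sig_mono Hfix r'0 h i; lra.
have h' : r' <= q n.
  by move: rd; rewrite ltr_norml /q => /andP [_ a]; lra.
have := sig_mono Hfix r'0 h' i; rewrite -usig; lra.
Qed.

Lemma b_cont (Hatt : forall r : R, 0 <= r -> forall s, linf_plus s ->
        (fun n => supnorm (fun i => iter n (T r) s i - sig r i)) @ \oo --> (0 : R))
  (r : R) eps : 0 <= r -> 0 < eps -> exists2 d, 0 < d &
  forall r', 0 <= r' -> `|r' - r| < d -> supnorm (fun i => sig r' i - sig r i) < eps.
Proof.
move=> r0 e0; have e4 : 0 < eps / 4 by lra.
have r10 : 0 <= r + 1 by lra.
have x0 : nonneg (fun _ : I => 0 : R) by move=> k; exact: lexx.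
have xs : forall j, (fun _ : I => 0 : R) j <= sig (r + 1) j by move=> j; exact: sig_ge0.
have l0 : linf_plus (fun _ : I => 0 : R) by apply: (@lin_of _ 0) => // j; exact: lexx.
pose U := sig (r + 1).
have U0 : nonneg U := sig_ge0 r10.
have Us : forall j, U j <= sig (r + 1) j by move=> j; exact: lexx.
have rr1 : r <= r + 1 by lra.
have [N1 _ h1] := proj1 (cvgrPdist_lt _ _) (Hatt r r0 _ l0) _ e4.
have [N2 _ h2] := proj1 (cvgrPdist_lt _ _) (Hatt r r0 _ (sig_lin r10)) _ e4.
pose N := maxn N1 N2.
have hN1 := h1 N (leq_maxl N1 N2); have hN2 := h2 N (leq_maxr N1 N2).
rewrite /= sub0r normrN in hN1; rewrite /= sub0r normrN in hN2.
have sN1 := le_lt_trans (ler_norm _) hN1; have sN2 := le_lt_trans (ler_norm _) hN2.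
have [d0 d0p H0] := iter_cont Hfix r0 x0 xs N e4.
have [dU dUp HU] := iter_cont Hfix r0 U0 Us N e4.
exists (Num.min 1 (Num.min d0 dU)); first by rewrite !lt_min ltr01 d0p dUp.
move=> r' r'0; rewrite !lt_min => /andP [a1 /andP [a2 a3]].
have r'r : r' <= r + 1 by move: a1; rewrite ltr_norml => /andP [_ ?]; lra.
apply: (@le_lt_trans _ _ (eps / 2)); last lra.
apply: supnorm_le => // i.
have sr : forall j, sig r j <= phi (r + 1).
  by move=> j; apply: le_trans (sig_le r10 j); exact: sig_mono.
have c1 := comp_le i (iterT_ge0 N r0 x0) (sig_ge0 r0)
  (fun j => le_trans (iterT_rr Hfix N r0 rr1 x0 xs j) (sig_le r10 j)) sr.
have c2 := comp_le i (iterT_ge0 N r0 U0) (sig_ge0 r0)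
  (fun j => le_trans (iterT_rr Hfix N r0 rr1 U0 Us j) (sig_le r10 j)) sr.
have k1 := H0 r' r'0 r'r a2 i.
have k2 := HU r' r'0 r'r a3 i.
have lo := iterT_le_sig Hfix N r'0 x0 (fun j => sig_ge0 r'0 j) i.
have hi : sig r' i <= iter N (T r') U i.
  rewrite -(iterT_fix Hfix N r'0); apply: iterT_mono => //; first exact: sig_ge0.
  by move=> j; apply: sig_mono.
move: c1 c2 k1 k2; rewrite !ler_norml => /andP[b1 b2] /andP[b3 b4] /andP[b5 b6] /andP[b7 b8].
apply/andP; split; lra.
Qed.

End Fix3.

Lemma a_cont (Hfix : forall r, 0 <= r -> T r (sig r) = sig r)
  (Hu : forall r, 0 <= r -> forall s, linf_plus s -> T r s = s -> s = sig r)
  (r : R) i eps : 0 <= r -> 0 < eps -> exists2 d, 0 < d &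
  forall r', 0 <= r' -> `|r' - r| < d -> `|sig r' i - sig r i| < eps.
Proof.
move=> r0 e0.
have [dl dlp Hl] := lower_cont Hfix i r0 e0.
have [du dup Hup] := upper_cont Hfix Hu i r0 e0.
exists (Num.min 1 (Num.min dl du)); first by rewrite !lt_min ltr01 dlp dup.
move=> r' r'0; rewrite !lt_min => /andP [a1 /andP [a2 a3]].
have r'r : r' <= r + 1 by move: a1; rewrite ltr_norml => /andP [_ ?]; lra.
have := Hl r' r'0 r'r a2; have := Hup r' r'0 a3.
rewrite ltr_norml => *; apply/andP; split; lra.
Qed.

Lemma master :
  ((forall r : R, 0 <= r ->
      T r (sig r) = sig r /\
      forall s, linf_plus s -> T r s = s -> s = sig r) ->
    (forall i : I, {within [set r : R | 0 <= r],
                     continuous (fun r => sig r i)}) /\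
    (forall (rn : nat -> R) (r : R), (forall n, 0 <= rn n) -> 0 <= r ->
       rn @ \oo --> r ->
       (exists M : R, forall n, supnorm (sig (rn n)) <= M) /\
       (forall i, (fun n => sig (rn n) i) @ \oo --> sig r i))) /\
  ((forall r : R, 0 <= r ->
      T r (sig r) = sig r /\
      forall s, linf_plus s ->
        (fun n => supnorm (fun i => iter n (T r) s i - sig r i)) @ \oo --> (0 : R)) ->
    forall r : R, 0 <= r -> forall eps : R, 0 < eps -> exists2 delta : R, 0 < delta &
      forall r', 0 <= r' -> `|r' - r| < delta ->
        supnorm (fun i => sig r' i - sig r i) < eps).
Proof using All.
split.
  move=> Ha.
  have Hfix : forall r, 0 <= r -> T r (sig r) = sig r by move=> r r0; case: (Ha r r0).
  have Hu : forall r, 0 <= r -> forall s, linf_plus s -> T r s = s -> s = sig r.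
    by move=> r r0; case: (Ha r r0).
  split.
    move=> i; apply/subspace_continuousP => x Ax; apply/cvgrPdist_lt => e e0.
    rewrite near_withinE.
    have [d dp Hd] := a_cont Hfix Hu i Ax e0.
    apply/nbhs_ballP; exists d => // y By Ay.
    by rewrite distrC; apply: Hd => //; move: By; rewrite /ball /= distrC.
  move=> rn r rn0 r0 hcv; split.
    have := cvg_seq_bounded (cvgP _ hcv); case => M [_ HM].
    have HK' : forall n, `|rn n| <= `|M| + 1.
      move=> n; apply: HM => //; have := ler_norm M; lra.
    have K0 : 0 <= `|M| + 1 by have := normr_ge0 M; lra.
    exists (phi (`|M| + 1)) => n; apply: supnorm_le => // i.
    rewrite ger0_norm; last exact: sig_ge0.
    apply: le_trans (sig_le K0 i); apply: sig_mono => //.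
    by apply: le_trans (HK' n); exact: ler_norm.
  move=> i; apply/cvgrPdist_lt => e e0.
  have [d dp Hd] := a_cont Hfix Hu i r0 e0.
  move/cvgrPdist_lt: hcv => /(_ d dp); apply: filterS => n Hn.
  by rewrite distrC; apply: Hd => //; rewrite distrC.
move=> Hb r r0 eps e0.
have Hfix : forall r, 0 <= r -> T r (sig r) = sig r by move=> r' r'0; case: (Hb r' r'0).
apply: b_cont => //.
by move=> r' r'0; case: (Hb r' r'0).
Qed.

End Gain.


Unset Implicit Arguments.

Theorem proposition3p10 (R : realType) (I : countType) (HI : inhabited I)
    (Ii : I -> seq I) (gam : I -> I -> R -> R) (mu : I -> (I -> R) -> \bar R) :
  is_gain_operator Ii gam mu ->
  oplus_MBI Ii gam mu ->
  (* (a) *)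
  ((forall r : R, 0 <= r ->
      Gamb Ii gam mu (fun _ => r) (sigma_star Ii gam mu r) = sigma_star Ii gam mu r /\
      forall s, linf_plus s -> Gamb Ii gam mu (fun _ => r) s = s ->
        s = sigma_star Ii gam mu r) ->
    (forall i : I, {within [set r : R | 0 <= r],
                     continuous (fun r => sigma_star Ii gam mu r i)}) /\
    (forall (rn : nat -> R) (r : R), (forall n, 0 <= rn n) -> 0 <= r ->
       rn @ \oo --> r ->
       (exists M : R, forall n, supnorm (sigma_star Ii gam mu (rn n)) <= M) /\
       (forall i, (fun n => sigma_star Ii gam mu (rn n) i) @ \oo -->
                    sigma_star Ii gam mu r i))) /\
  (* (b) *)
  ((forall r : R, 0 <= r ->
      Gamb Ii gam mu (fun _ => r) (sigma_star Ii gam mu r) = sigma_star Ii gam mu r /\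
      forall s, linf_plus s ->
        (fun n => supnorm (fun i => iter n (Gamb Ii gam mu (fun _ => r)) s i
                                    - sigma_star Ii gam mu r i)) @ \oo --> (0 : R)) ->
    forall r : R, 0 <= r -> forall eps : R, 0 < eps -> exists2 delta : R, 0 < delta &
      forall r', 0 <= r' -> `|r' - r| < delta ->
        supnorm (fun i => sigma_star Ii gam mu r' i - sigma_star Ii gam mu r i) < eps).
Proof.
move=> [_ HK Heq [xi [Hxi0 Hxi]] [HM2 HM3 HM4]] [phi [Hphi HMBI]].
have Hxi' : forall i s, linf_plus s -> ((xi (supnorm s))%:E <= mu i s)%E.
  by move=> i s; case: (Hxi i) => _; apply.
have HM3' : forall i (J : seq I) s, linf_plus s -> vanishes_off J s -> mu i s \is a fin_num.
  by move=> i J; case: (HM3 i J).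
exact: (@master R I HI Ii gam mu HK Heq xi Hxi0 Hxi' HM2 HM3' HM4 phi Hphi HMBI).
Qed.
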